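(* Assume the $abc$-conjecture. Then there is an absolute constant $C>0$ such that for every real $x > C$ and every real $y$ with $1 \le y \le x^{0.2}$, there do not exist squarefull integers $n_1<n_2<n_3$ in the interval $(x, x+y]$ with $n_1+n_3 = 2n_2$ (i.e. the squarefull numbers in $(x,x+y]$ contain no non-trivial three-term arithmetic progression).
   Context: A positive integer $n$ is squarefull if every prime $p$ dividing $n$ satisfies $p^2\mid n$. For a nonzero integer $m$, $\kappa(m)=\prod_{p\mid m} p$. The $abc$-conjecture is the statement: for every $\epsilon>0$ there is a constant $C_\epsilon>0$ such that for all integers $a,b,c$ with $a+b=c$ and $\gcd(a,b)=1$, one has $\max\{|a|,|b|,|c|\} \le C_\epsilon\, \kappa(abc)^{1+\epsilon}$. *)

(* Defs.v *)
From Stdlib Require Import ZArith Znumtheory Reals List.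
Open Scope Z_scope.

Definition Zprimeb (p : Z) : bool := if prime_dec p then true else false.

(* kappa(m) = product of the (positive) primes dividing m. Intended for m <> 0. *)
Definition kappa (m : Z) : Z :=
  fold_right Z.mul 1
    (filter (fun p => andb (Zprimeb p) (Z.rem m p =? 0))
            (map Z.of_nat (seq 0 (S (Z.abs_nat m))))).

Definition squarefull (n : Z) : Prop :=
  0 < n /\ forall p : Z, prime p -> (p | n) -> (p * p | n).

Definition abc_conjecture : Prop :=
  forall eps : R, (0 < eps)%R ->
    exists C : R, (0 < C)%R /\
      forall a b c : Z, a + b = c -> Z.gcd a b = 1 -> a * b * c <> 0 ->
        (IZR (Z.max (Z.abs a) (Z.max (Z.abs b) (Z.abs c)))
           <= C * Rpower (IZR (kappa (a * b * c))) (1 + eps))%R.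

(* Main.v *)
Require Import Defs.
From Stdlib Require Import ZArith Znumtheory Reals List FinFun Lia Lra.
Open Scope Z_scope.

Lemma prod_pos l : (forall q, In q l -> 1 < q) -> 1 <= fold_right Z.mul 1 l.
Proof.
  induction l as [|a l IH]; simpl; intros H; [lia|].
  assert (1 < a) by auto. assert (1 <= fold_right Z.mul 1 l) by auto. nia.
Qed.

Lemma rel_prime_prod p l : prime p -> ~ In p l -> (forall q, In q l -> prime q) ->
  rel_prime p (fold_right Z.mul 1 l).
Proof.
  intros Hp. induction l as [|a l IH]; simpl; intros Hn Hq.
  - apply rel_prime_sym, rel_prime_1.
  - apply rel_prime_mult.
    + apply prime_rel_prime; auto. intros Hd.
      apply Hn; left; symmetry; apply prime_div_prime; auto.
    + apply IH; auto.
Qed.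

Lemma comb a b N : (a | N) -> (b | N) -> rel_prime a b -> (a * b | N).
Proof.
  intros [k Hk] Hb Hr. subst N.
  assert (Hb' : (b | k)).
  { apply Gauss with a. rewrite Z.mul_comm. exact Hb. apply rel_prime_sym; auto. }
  destruct Hb' as [j Hj]; subst k. exists j; ring.
Qed.

Lemma sq_prod_div l N : NoDup l -> (forall q, In q l -> prime q /\ (q*q | N)) ->
  (fold_right Z.mul 1 l * fold_right Z.mul 1 l | N).
Proof.
  induction l as [|p l IH]; simpl; intros Hnd H.
  - apply Z.divide_1_l.
  - inversion Hnd; subst.
    destruct (H p (or_introl eq_refl)) as [Hp Hpp].
    set (P := fold_right Z.mul 1 l).
    assert (HP : (P * P | N)) by (apply IH; auto).
    assert (Hr : rel_prime p P).
    { apply rel_prime_prod; auto. intros q Hq; apply (H q (or_intror Hq)). }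
    assert (Hr2 : rel_prime (p*p) (P*P)).
    { apply rel_prime_sym. apply rel_prime_mult; apply rel_prime_sym; apply rel_prime_mult; auto. }
    replace (p * P * (p * P)) with ((p*p)*(P*P)) by ring.
    apply comb; auto.
Qed.

Lemma kappa_props m N : m <> 0 -> (forall p, prime p -> (p | m) -> (p*p | N)) ->
  1 <= kappa m /\ (kappa m * kappa m | N).
Proof.
  intros Hm H. unfold kappa.
  set (f := fun p => andb (Zprimeb p) (Z.rem m p =? 0)).
  set (l := filter f (map Z.of_nat (seq 0 (S (Z.abs_nat m))))).
  assert (Hin : forall q, In q l -> prime q /\ (q | m)).
  { intros q Hq. unfold l in Hq. apply filter_In in Hq. destruct Hq as [_ Hf].
    unfold f, Zprimeb in Hf. destruct (prime_dec q) as [Hp|]; [|discriminate].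
    simpl in Hf. apply Z.eqb_eq in Hf. split; auto.
    apply Z.rem_divide; auto. pose proof (prime_ge_2 q Hp); lia. }
  split.
  - apply prod_pos. intros q Hq. pose proof (prime_ge_2 q (proj1 (Hin q Hq))); lia.
  - apply sq_prod_div.
    + apply NoDup_filter, Injective_map_NoDup; [|apply seq_NoDup].
      intros a b; lia.
    + intros q Hq. destruct (Hin q Hq). split; auto.
Qed.

Lemma int_part n1 n2 n3 : squarefull n1 -> squarefull n2 -> squarefull n3 ->
  n1 < n2 < n3 -> n1 + n3 = 2 * n2 ->
  exists h m1 m2 m3 e, 1 <= h /\ 1 <= m1 /\ 1 <= e /\
    n1 = h * m1 /\ n2 = h * m2 /\ n3 = h * m3 /\ m2 = m1 + e /\ m3 = m2 + e /\
    Z.gcd (m1 * m3) (e * e) = 1 /\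
    1 <= kappa (m1 * m3 * (e * e) * (m2 * m2)) /\
    kappa (m1 * m3 * (e * e) * (m2 * m2)) * kappa (m1 * m3 * (e * e) * (m2 * m2))
      <= n1 * n2 * n3 * (e * e).
Proof.
  intros [H1 S1] [H2 S2] [H3 S3] Hlt Hsum.
  set (h := Z.gcd n1 n2).
  assert (Hh : 0 < h).
  { unfold h. pose proof (Z.gcd_nonneg n1 n2). assert (h <> 0).
    { unfold h; intro E; apply Z.gcd_eq_0 in E; lia. } unfold h in *; lia. }
  destruct (Z.gcd_divide_l n1 n2) as [m1 Hm1].
  destruct (Z.gcd_divide_r n1 n2) as [m2 Hm2].
  fold h in Hm1, Hm2.
  assert (Hg : Z.gcd m1 m2 = 1).
  { pose proof (Z.gcd_div_gcd n1 n2 h ltac:(lia) eq_refl) as G.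
    rewrite Hm1, Hm2 in G at 1. rewrite !Z.div_mul in G by lia. exact G. }
  set (e := m2 - m1). set (m3 := m2 + e).
  assert (Hm1p : 1 <= m1) by nia.
  assert (He : 1 <= e) by (unfold e; nia).
  assert (Hm3 : n3 = h * m3) by (unfold m3, e; nia).
  assert (Rp12 : rel_prime m1 m2) by (apply Zgcd_1_rel_prime; auto).
  assert (R1e : rel_prime m1 e).
  { apply rel_prime_bezout in Rp12. destruct Rp12 as [u v Huv].
    apply bezout_rel_prime. apply (Bezout_intro _ _ _ (u+v) v). unfold e. lia. }
  assert (R2e : rel_prime m2 e).
  { apply rel_prime_bezout in Rp12. destruct Rp12 as [u v Huv].
    apply bezout_rel_prime. apply (Bezout_intro _ _ _ (u+v) (-u)). unfold e. lia. }
  assert (R3e : rel_prime m3 e).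
  { apply rel_prime_bezout in R2e. destruct R2e as [u v Huv].
    apply bezout_rel_prime. apply (Bezout_intro _ _ _ u (v - u)). unfold m3. lia. }
  assert (Rg : rel_prime (m1 * m3) (e * e)).
  { apply rel_prime_sym. apply rel_prime_mult; apply rel_prime_sym; apply rel_prime_mult; auto. }
  assert (Hkp : 1 <= kappa (m1 * m3 * (e * e) * (m2 * m2)) /\
     (kappa (m1 * m3 * (e * e) * (m2 * m2)) * kappa (m1 * m3 * (e * e) * (m2 * m2))
        | n1 * n2 * n3 * (e * e))).
  { apply kappa_props.
    - assert (1 <= m2) by (unfold e in He; lia). assert (1 <= m3) by (unfold m3; lia).
      assert (0 < m1 * m3 * (e * e) * (m2 * m2)) by (repeat apply Z.mul_pos_pos; lia). lia.
    - intros p Hp Hd.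
      assert (D1 : (p | n1) -> (p * p | n1 * n2 * n3 * (e * e))).
      { intros D; apply S1 in D; auto. apply Z.divide_mul_l, Z.divide_mul_l, Z.divide_mul_l; auto. }
      assert (D2 : (p | n2) -> (p * p | n1 * n2 * n3 * (e * e))).
      { intros D; apply S2 in D; auto. apply Z.divide_mul_l, Z.divide_mul_l, Z.divide_mul_r; auto. }
      assert (D3 : (p | n3) -> (p * p | n1 * n2 * n3 * (e * e))).
      { intros D; apply S3 in D; auto. apply Z.divide_mul_l, Z.divide_mul_r; auto. }
      assert (De : (p | e) -> (p * p | n1 * n2 * n3 * (e * e))).
      { intros D; apply Z.divide_mul_r; apply Z.divide_trans with (p * e); [apply Z.mul_divide_mono_l|apply Z.mul_divide_mono_r]; auto. }
      apply prime_mult in Hd; auto. destruct Hd as [Hd|Hd].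
      + apply prime_mult in Hd; auto. destruct Hd as [Hd|Hd].
        * apply prime_mult in Hd; auto. destruct Hd as [Hd|Hd].
          -- apply D1. rewrite Hm1. apply Z.divide_mul_l; auto.
          -- apply D3. rewrite Hm3. apply Z.divide_mul_r; auto.
        * apply prime_mult in Hd; auto. destruct Hd; auto.
      + apply prime_mult in Hd; auto. destruct Hd as [Hd|Hd];
          apply D2; rewrite Hm2; apply Z.divide_mul_l; auto. }
  destruct Hkp as [Hk1 Hk2].
  exists h, m1, m2, m3, e. repeat split; try lia.
  - apply Zgcd_1_rel_prime; auto.
  - apply Z.divide_pos_le; auto.
    assert (1 <= m2) by (unfold e in He; lia). assert (1 <= m3) by (unfold m3; lia).
    repeat apply Z.mul_pos_pos; lia.
Qed.
Open Scope R_scope.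

Lemma ln2_lt1 : ln 2 < 1.
Proof.
  rewrite <- ln_exp with 1. apply ln_increasing; [lra|].
  pose proof (exp_ineq1 1 ltac:(lra)). lra.
Qed.

Lemma ln_le x y : 0 < x -> x <= y -> ln x <= ln y.
Proof. intros H1 H2. destruct (Rle_lt_or_eq_dec _ _ H2) as [H|H].
  - left; apply ln_increasing; auto.
  - subst; lra. Qed.

Lemma IZR_pos z : (1 <= z)%Z -> 0 < IZR z.
Proof. intros; apply IZR_lt; lia. Qed.

Theorem mainTheorem8 :
  abc_conjecture ->
  exists C : R, (0 < C)%R /\
    forall x y : R, (C < x)%R -> (1 <= y)%R -> (y <= Rpower x (2 / 10))%R ->
      ~ (exists n1 n2 n3 : Z,
           squarefull n1 /\ squarefull n2 /\ squarefull n3 /\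
           (n1 < n2 < n3)%Z /\
           (x < IZR n1)%R /\ (IZR n1 <= x + y)%R /\
           (x < IZR n2)%R /\ (IZR n2 <= x + y)%R /\
           (x < IZR n3)%R /\ (IZR n3 <= x + y)%R /\
           (n1 + n3 = 2 * n2)%Z).
Proof.
  intros abc.
  destruct (abc (1/20) ltac:(lra)) as [C0 [HC0 Habc]].
  set (lC := ln C0).
  exists (exp (40 * (Rabs lC + 2))). split; [apply exp_pos|].
  intros x y Hx Hy1 Hy2 [n1 [n2 [n3 [S1 [S2 [S3 [Hlt [A1 [B1 [A2 [B2 [A3 [B3 Hs]]]]]]]]]]]]].
  assert (Hx1 : 1 < x).
  { assert (exp 0 < exp (40 * (Rabs lC + 2))) by (apply exp_increasing; pose proof (Rabs_pos lC); lra).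
    rewrite exp_0 in H; lra. }
  assert (Hlx : 40 * (Rabs lC + 2) < ln x).
  { rewrite <- ln_exp with (40 * (Rabs lC + 2)). apply ln_increasing; [apply exp_pos|lra]. }
  assert (Hyx : y <= x).
  { rewrite <- (Rpower_1 x) by lra. eapply Rle_trans; [exact Hy2|]. apply Rle_Rpower; lra. }
  assert (Hly : ln y <= 2/10 * ln x).
  { unfold Rpower in Hy2. rewrite <- (ln_exp (2/10 * ln x)). apply ln_le; lra. }
  destruct (int_part n1 n2 n3 S1 S2 S3 Hlt Hs) as
      [h [m1 [m2 [m3 [e [Hh [Hm1 [He [E1 [E2 [E3 [E12 [E23 [Hg [Hk1 Hk2]]]]]]]]]]]]]]].
  set (K := kappa (m1 * m3 * (e * e) * (m2 * m2))) in *.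
  assert (Hm2 : (1 <= m2)%Z) by lia. assert (Hm3 : (1 <= m3)%Z) by lia.
  specialize (Habc (m1 * m3)%Z (e * e)%Z (m2 * m2)%Z ltac:(subst; ring) Hg ltac:(nia)).
  fold K in Habc.
  assert (Hc : IZR (m2 * m2) <= C0 * Rpower (IZR K) (1 + 1/20)).
  { eapply Rle_trans; [|exact Habc]. apply IZR_le.
    rewrite (Z.abs_eq (m2*m2)) by nia. lia. }
  pose proof (IZR_pos _ Hh). pose proof (IZR_pos _ Hm2). pose proof (IZR_pos _ He).
  pose proof (IZR_pos _ Hk1).
  assert (P1 : (1 <= n1)%Z) by nia. assert (P2 : (1 <= n2)%Z) by nia. assert (P3 : (1 <= n3)%Z) by nia.
  pose proof (IZR_pos _ P1). pose proof (IZR_pos _ P2). pose proof (IZR_pos _ P3).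
  assert (Q1 : 2 * ln (IZR m2) <= lC + (1 + 1/20) * ln (IZR K)).
  { apply ln_le in Hc; [|rewrite mult_IZR; apply Rmult_lt_0_compat; lra].
    rewrite mult_IZR, ln_mult in Hc by lra.
    unfold Rpower in Hc. rewrite ln_mult, ln_exp in Hc by (try apply exp_pos; lra).
    unfold lC; lra. }
  assert (Q2 : 2 * ln (IZR K) <= ln (IZR n1) + ln (IZR n2) + ln (IZR n3) + 2 * ln (IZR e)).
  { apply IZR_le in Hk2. rewrite !mult_IZR in Hk2.
    apply ln_le in Hk2; [|apply Rmult_lt_0_compat; lra].
    rewrite !ln_mult in Hk2 by (repeat apply Rmult_lt_0_compat; lra). lra. }
  assert (Qn : forall n, x < IZR n -> IZR n <= x + y -> ln (IZR n) <= ln 2 + ln x).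
  { intros n Ha Hb. rewrite <- ln_mult by lra. apply ln_le; lra. }
  pose proof (Qn _ A1 B1). pose proof (Qn _ A2 B2). pose proof (Qn _ A3 B3).
  assert (Q3 : ln (IZR h) + ln (IZR m2) > ln x).
  { rewrite <- ln_mult by lra. rewrite <- mult_IZR, <- E2. apply ln_increasing; lra. }
  assert (Q4 : ln (IZR h) + ln (IZR e) <= 2/10 * ln x).
  { rewrite <- ln_mult by lra. rewrite <- mult_IZR.
    assert (2 * IZR (h * e) <= y).
    { rewrite <- mult_IZR. replace (2 * (h * e))%Z with (n3 - n1)%Z by lia.
      rewrite minus_IZR. lra. }
    assert (ln (IZR (h * e)) <= ln y) by (apply ln_le; [rewrite mult_IZR; nra|lra]). lra. }
  assert (ln (IZR h) >= 0). { rewrite <- ln_1. apply Rle_ge, ln_le; try lra. apply IZR_le in Hh; lra. }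
  assert (ln (IZR e) >= 0). { rewrite <- ln_1. apply Rle_ge, ln_le; try lra. apply IZR_le in He; lra. }
  assert (ln (IZR K) >= 0). { rewrite <- ln_1. apply Rle_ge, ln_le; try lra. apply IZR_le in Hk1; lra. }
  pose proof ln2_lt1. pose proof (Rle_abs lC). pose proof (Rle_abs (-lC)). rewrite Rabs_Ropp in *.
  assert (0 < ln 2) by (rewrite <- ln_1; apply ln_increasing; lra).
  lra.
Qed.
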